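(* Let $L$ be a Poisson $\mathfrak{h}$-base manifold. Then the bivector field $\varpi:=\sum_i\vec{\eta^i}\wedge\vec{h^i}$ is a Poisson bracket on $L$ making $L$ a Poisson-Lie $D(\mathfrak{h})$-manifold, and $\varpi$ coincides with the bivector field $\sum_i\vec{\eta^i}\otimes\vec{h^i}$, i.e. $\varpi(a,b)=\sum_i(\vec{\eta^i}a)(\vec{h^i}b)$.
   Context: $\mathfrak{h}$ is a finite dimensional complex Lie bialgebra and $D(\mathfrak{h})=\mathfrak{h}\oplus\mathfrak{h}^*_{op}$ its Drinfeld double ($\mathfrak{h}^*_{op}$ the dual Lie algebra with opposite bracket; $D(\mathfrak{h})$ carries the unique Lie bracket extending those of $\mathfrak{h}$, $\mathfrak{h}^*_{op}$ for which the natural symmetric pairing is invariant). $\{h^i\}$ is a basis of $\mathfrak{h}$ and $\{\eta^i\}$ the dual basis of $\mathfrak{h}^*_{op}$; $x\wedge y=\frac12(x\otimes y-y\otimes x)$. $D(\mathfrak{h})$ is a coboundary Lie bialgebra with r-matrix $r=\sum_i\eta^i\wedge h^i$, cobracket $\mu(x)=[x\otimes1+1\otimes x,r]$, and $\theta=\frac12\sum_i(\eta^i\otimes h^i+h^i\otimes\eta^i)$. A Poisson $\mathfrak{h}$-base manifold is a manifold $L$ whose function algebra $\mathcal{A}(L)$ carries an action $x\mapsto\vec x$ of $D(\mathfrak{h})$ by vector fields such that $\theta$ induces the zero bidifferential operator: $\sum_i\bigl((\vec{\eta^i}a)(\vec{h^i}b)+(\vec{h^i}a)(\vec{\eta^i}b)\bigr)=0$.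 A Poisson bracket $\pi$ on a manifold with action $x\mapsto\vec x$ of a Lie bialgebra with cobracket $\mu$ makes it a Poisson-Lie manifold if $\vec x\pi(a,b)-\pi(\vec xa,b)-\pi(a,\vec xb)=\overrightarrow{\mu(x)}(a,b)$ for all $x$ and functions $a,b$, where $\overrightarrow{\mu(x)}$ is the bidifferential operator induced by $\mu(x)$. *)

(* Defs.v *)
(* Algebraic model of the function algebra of a manifold:
   a commutative K-algebra A, vector fields = K-linear derivations of A. *)
From HB Require Import structures.
From mathcomp Require Import all_boot all_order all_algebra.
Set Implicit Arguments.
Unset Strict Implicit.
Unset Printing Implicit Defensive.
Import GRing.Theory.
Local Open Scope ring_scope.

Definition bvec {K : fieldType} {m : nat} (i : 'I_m) : 'rV[K]_m := delta_mx 0 i.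

(* tensor product V (x) V of V = 'rV_m, identified with 'M_m:
   u (x) v has coefficient matrix u^T *m v *)
Definition tens {K : fieldType} {m : nat} (u v : 'rV[K]_m) : 'M[K]_m := u^T *m v.

Definition wedge {K : fieldType} {m : nat} (u v : 'rV[K]_m) : 'M[K]_m :=
  2^-1 *: (tens u v - tens v u).

(* action of x on tensors: x.(u (x) v) = [x,u] (x) v + u (x) [x,v]
   i.e. [x (x) 1 + 1 (x) x, T] *)
Definition adT {K : fieldType} {m : nat} (br : 'rV[K]_m -> 'rV[K]_m -> 'rV[K]_m)
  (x : 'rV[K]_m) (T : 'M[K]_m) : 'M[K]_m :=
  \sum_(p < m) \sum_(q < m)
     T p q *: (tens (br x (bvec p)) (bvec q) + tens (bvec p) (br x (bvec q))).

Definition dotr {K : fieldType} {m : nat} (u v : 'rV[K]_m) : K := (u *m v^T) 0 0.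

Definition is_lie {K : fieldType} {m : nat} (br : 'rV[K]_m -> 'rV[K]_m -> 'rV[K]_m) : Prop :=
  (forall (k : K) x y z, br (k *: x + y) z = k *: br x z + br y z) /\
  (forall (k : K) x y z, br x (k *: y + z) = k *: br x y + br x z) /\
  (forall x, br x x = 0) /\
  (forall x y z, br x (br y (z)) + br y (br z x) + br z (br x y) = 0).

(* the bracket on h^* dual to the cobracket delta : h -> h (x) h :
   <[xi,zeta], x> = <xi (x) zeta, delta x> ; covectors written in the dual basis *)
Definition dual_br {K : fieldType} {n : nat} (delta : 'rV[K]_n -> 'M[K]_n)
  (xi zeta : 'rV[K]_n) : 'rV[K]_n :=
  \row_k (xi *m delta (bvec k) *m zeta^T) 0 0.

Definition is_lie_bialg {K : fieldType} {n : nat}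
  (brh : 'rV[K]_n -> 'rV[K]_n -> 'rV[K]_n) (delta : 'rV[K]_n -> 'M[K]_n) : Prop :=
  is_lie brh /\
  (forall (k : K) x y, delta (k *: x + y) = k *: delta x + delta y) /\
  (forall x, (delta x)^T = - delta x) /\
  is_lie (dual_br delta) /\
  (forall x y, delta (brh x y) = adT brh x (delta y) - adT brh y (delta x)).

(* D(h) = h (+) h^*_op, as 'rV_(n+n): first block h, second block h^* *)
Definition ih {K : fieldType} {n : nat} (x : 'rV[K]_n) : 'rV[K]_(n + n) := row_mx x 0.
Definition ieta {K : fieldType} {n : nat} (xi : 'rV[K]_n) : 'rV[K]_(n + n) := row_mx 0 xi.
Definition pairD {K : fieldType} {n : nat} (u v : 'rV[K]_(n + n)) : K :=
  dotr (lsubmx u) (rsubmx v) + dotr (rsubmx u) (lsubmx v).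

(* brD is the Drinfeld double bracket: a Lie bracket extending those of h and
   h^*_op for which the pairing is invariant (it is unique) *)
Definition is_double {K : fieldType} {n : nat}
  (brh : 'rV[K]_n -> 'rV[K]_n -> 'rV[K]_n) (delta : 'rV[K]_n -> 'M[K]_n)
  (brD : 'rV[K]_(n + n) -> 'rV[K]_(n + n) -> 'rV[K]_(n + n)) : Prop :=
  is_lie brD /\
  (forall x y, brD (ih x) (ih y) = ih (brh x y)) /\
  (forall xi zeta, brD (ieta xi) (ieta zeta) = ieta (- dual_br delta xi zeta)) /\
  (forall u v w, pairD (brD u v) w = pairD u (brD v w)).

Definition hD {K : fieldType} {n : nat} (i : 'I_n) : 'rV[K]_(n + n) := ih (bvec i).
Definition etaD {K : fieldType} {n : nat} (i : 'I_n) : 'rV[K]_(n + n) := ieta (bvec i).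

Definition rmat (K : fieldType) (n : nat) : 'M[K]_(n + n) :=
  \sum_(i < n) wedge (etaD i) (hD i).
Definition thetamat (K : fieldType) (n : nat) : 'M[K]_(n + n) :=
  2^-1 *: \sum_(i < n) (tens (etaD i) (hD i) + tens (hD i) (etaD i)).
(* cobracket of D(h): mu(x) = [x (x) 1 + 1 (x) x, r] *)
Definition mu {K : fieldType} {n : nat}
  (brD : 'rV[K]_(n + n) -> 'rV[K]_(n + n) -> 'rV[K]_(n + n)) (x : 'rV[K]_(n + n)) :=
  adT brD x (rmat K n).

Definition is_action {K : fieldType} {m : nat} {A : comAlgType K}
  (br : 'rV[K]_m -> 'rV[K]_m -> 'rV[K]_m) (act : 'rV[K]_m -> A -> A) : Prop :=
  (forall (k : K) x y a, act (k *: x + y) a = k *: act x a + act y a) /\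
  (forall x (k : K) a b, act x (k *: a + b) = k *: act x a + act x b) /\
  (forall x a b, act x (a * b) = act x a * b + a * act x b) /\
  (forall x y a, act (br x y) a = act x (act y a) - act y (act x a)).

Definition bidiff {K : fieldType} {m : nat} {A : comAlgType K}
  (act : 'rV[K]_m -> A -> A) (T : 'M[K]_m) (a b : A) : A :=
  \sum_(p < m) \sum_(q < m) T p q *: (act (bvec p) a * act (bvec q) b).

Definition is_poisson_h_base {K : fieldType} {n : nat} {A : comAlgType K}
  (brD : 'rV[K]_(n + n) -> 'rV[K]_(n + n) -> 'rV[K]_(n + n))
  (act : 'rV[K]_(n + n) -> A -> A) : Prop :=
  is_action brD act /\ (forall a b, bidiff act (thetamat K n) a b = 0).

Definition is_poisson {K : fieldType} {A : comAlgType K} (P : A -> A -> A) : Prop :=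
  (forall (k : K) a b c, P (k *: a + b) c = k *: P a c + P b c) /\
  (forall a b, P a b = - P b a) /\
  (forall a b c, P a (b * c) = P a b * c + b * P a c) /\
  (forall a b c, P a (P b c) + P b (P c a) + P c (P a b) = 0).

Definition is_poisson_lie {K : fieldType} {m : nat} {A : comAlgType K}
  (cobr : 'rV[K]_m -> 'M[K]_m) (act : 'rV[K]_m -> A -> A) (P : A -> A -> A) : Prop :=
  forall x a b, act x (P a b) - P (act x a) b - P a (act x b) = bidiff act (cobr x) a b.

(* Main.v *)
Require Import Defs.
From mathcomp Require Import all_boot all_order all_algebra.
From mathcomp.algebra_tactics Require Import ring.
Import GRing.Theory.
Local Open Scope ring_scope.


Lemma act_add {K : fieldType} {m : nat} {A : comAlgType K} {br} {act : 'rV[K]_m -> A -> A} :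
  is_action br act -> forall x a b, act x (a + b) = act x a + act x b.
Proof. rewrite /is_action; case=> _ [H _] x a b; by rewrite -[a]scale1r H !scale1r. Qed.

Lemma act0 {K : fieldType} {m : nat} {A : comAlgType K} {br} {act : 'rV[K]_m -> A -> A} :
  is_action br act -> forall x, act x 0 = 0.
Proof.
move=> H x; have := act_add H x 0 0; rewrite addr0 => E.
by apply/(addrI (act x 0)); rewrite addr0 -E.
Qed.

Lemma actZ {K : fieldType} {m : nat} {A : comAlgType K} {br} {act : 'rV[K]_m -> A -> A} :
  is_action br act -> forall x k a, act x (k *: a) = k *: act x a.
Proof. move=> H x k a; have [_ [H2 _]] := H; by rewrite -[k *: a]addr0 H2 (act0 H) addr0. Qed.

Lemma act_sum {K : fieldType} {m : nat} {A : comAlgType K} {br} {act : 'rV[K]_m -> A -> A} :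
  is_action br act -> forall x (I : Type) (r : seq I) (P : pred I) (F : I -> A),
  act x (\sum_(i <- r | P i) F i) = \sum_(i <- r | P i) act x (F i).
Proof. move=> H x I r P F; apply: (big_morph _ (act_add H x) (act0 H x)). Qed.

Lemma actl_add {K : fieldType} {m : nat} {A : comAlgType K} {br} {act : 'rV[K]_m -> A -> A} :
  is_action br act -> forall u v a, act (u + v) a = act u a + act v a.
Proof. rewrite /is_action; case=> H _ u v a; by rewrite -[u]scale1r H !scale1r. Qed.

Lemma actl0 {K : fieldType} {m : nat} {A : comAlgType K} {br} {act : 'rV[K]_m -> A -> A} :
  is_action br act -> forall a, act 0 a = 0.
Proof.
move=> H a; have := actl_add H 0 0 a; rewrite addr0 => E.
by apply/(addrI (act 0 a)); rewrite addr0 -E.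
Qed.

Lemma actlZ {K : fieldType} {m : nat} {A : comAlgType K} {br} {act : 'rV[K]_m -> A -> A} :
  is_action br act -> forall k u a, act (k *: u) a = k *: act u a.
Proof. move=> H k u a; have [H1 _] := H; by rewrite -[k *: u]addr0 H1 (actl0 H) addr0. Qed.

Lemma actl_sum {K : fieldType} {m : nat} {A : comAlgType K} {br} {act : 'rV[K]_m -> A -> A} :
  is_action br act -> forall a (I : Type) (r : seq I) (P : pred I) (F : I -> 'rV[K]_m),
  act (\sum_(i <- r | P i) F i) a = \sum_(i <- r | P i) act (F i) a.
Proof. move=> H a I r P F; apply: (big_morph (fun u => act u a) (fun u v => actl_add H u v a) (actl0 H a)). Qed.

Lemma act_expand {K : fieldType} {m : nat} {A : comAlgType K} {br} {act : 'rV[K]_m -> A -> A} :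
  is_action br act -> forall u a, act u a = \sum_(p < m) u 0 p *: act (bvec p) a.
Proof.
move=> H u a; rewrite {1}[u]row_sum_delta (actl_sum H); apply: eq_bigr => p _.
by rewrite (actlZ H).
Qed.

Lemma bidiff_tens {K : fieldType} {m : nat} {A : comAlgType K} {br} {act : 'rV[K]_m -> A -> A} :
  is_action br act -> forall u v a b, bidiff act (tens u v) a b = act u a * act v b.
Proof.
move=> H u v a b; rewrite (act_expand H u) (act_expand H v) mulr_suml.
apply: eq_bigr => p _; rewrite mulr_sumr; apply: eq_bigr => q _.
rewrite /tens !mxE big_ord1 !mxE -scalerAl -scalerAr scalerA.
done.
Qed.

Lemma bidiffD {K : fieldType} {m : nat} {A : comAlgType K} (act : 'rV[K]_m -> A -> A) T S a b :
  bidiff act (T + S) a b = bidiff act T a b + bidiff act S a b.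
Proof.
rewrite /bidiff -big_split; apply: eq_bigr => p _; rewrite -big_split; apply: eq_bigr => q _.
by rewrite mxE scalerDl.
Qed.

Lemma bidiffZ {K : fieldType} {m : nat} {A : comAlgType K} (act : 'rV[K]_m -> A -> A) k T a b :
  bidiff act (k *: T) a b = k *: bidiff act T a b.
Proof.
rewrite /bidiff scaler_sumr; apply: eq_bigr => p _; rewrite scaler_sumr; apply: eq_bigr => q _.
by rewrite mxE scalerA.
Qed.

Lemma bidiff0 {K : fieldType} {m : nat} {A : comAlgType K} (act : 'rV[K]_m -> A -> A) a b :
  bidiff act 0 a b = 0.
Proof. by rewrite -(scale0r (0 : 'M[K]_m)) bidiffZ scale0r. Qed.

Lemma bidiffN {K : fieldType} {m : nat} {A : comAlgType K} (act : 'rV[K]_m -> A -> A) T a b :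
  bidiff act (- T) a b = - bidiff act T a b.
Proof. by rewrite -scaleN1r bidiffZ scaleN1r. Qed.

Lemma bidiff_sum {K : fieldType} {m : nat} {A : comAlgType K} (act : 'rV[K]_m -> A -> A) a b
  (I : Type) (r : seq I) (P : pred I) (F : I -> 'M[K]_m) :
  bidiff act (\sum_(i <- r | P i) F i) a b = \sum_(i <- r | P i) bidiff act (F i) a b.
Proof. apply: (big_morph (fun T => bidiff act T a b) (fun T S => bidiffD act T S a b) (bidiff0 act a b)). Qed.

Lemma PL {K : fieldType} {m : nat} {A : comAlgType K} {br} {act : 'rV[K]_m -> A -> A} :
  is_action br act -> forall T x a b,
  act x (bidiff act T a b) - bidiff act T (act x a) b - bidiff act T a (act x b)
  = bidiff act (adT br x T) a b.
Proof.
move=> H T x a b.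
have -> : bidiff act (adT br x T) a b = \sum_p \sum_q T p q *:
   (act (br x (bvec p)) a * act (bvec q) b + act (bvec p) a * act (br x (bvec q)) b).
  rewrite /adT bidiff_sum; apply: eq_bigr => p _; rewrite bidiff_sum; apply: eq_bigr => q _.
  by rewrite bidiffZ bidiffD !(bidiff_tens H).
rewrite /bidiff (act_sum H) -!sumrB; apply: eq_bigr => p _.
rewrite (act_sum H) -!sumrB; apply: eq_bigr => q _.
have [_ [_ [HL HB]]] := H.
rewrite (actZ H) -!scalerBr HL !HB; congr (_ *: _); ring.
Qed.

Lemma dotrC {K : fieldType} {m : nat} (u v : 'rV[K]_m) : dotr u v = dotr v u.
Proof. rewrite /dotr; transitivity (((u *m v^T)^T) 0 0); first by rewrite [RHS]mxE. by rewrite trmx_mul trmxK. Qed.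

Lemma dotr_delta {K : fieldType} {m : nat} (v : 'rV[K]_m) k : dotr v (bvec k) = v 0 k.
Proof. by rewrite /dotr /bvec trmx_delta -colE mxE. Qed.

Lemma dotr0 {K : fieldType} {m : nat} (v : 'rV[K]_m) : dotr v 0 = 0.
Proof. by rewrite /dotr trmx0 mulmx0 mxE. Qed.

Lemma dotr0l {K : fieldType} {m : nat} (v : 'rV[K]_m) : dotr 0 v = 0.
Proof. by rewrite dotrC dotr0. Qed.

Lemma dotrNl {K : fieldType} {m : nat} (u v : 'rV[K]_m) : dotr (- u) v = - dotr u v.
Proof. by rewrite /dotr mulNmx mxE. Qed.

Lemma pairDC {K : fieldType} {n : nat} (u v : 'rV[K]_(n + n)) : pairD u v = pairD v u.
Proof. by rewrite /pairD dotrC addrC dotrC. Qed.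

Lemma pairDNl {K : fieldType} {n : nat} (u v : 'rV[K]_(n + n)) : pairD (- u) v = - pairD u v.
Proof. by rewrite /pairD !linearN /= !dotrNl opprD. Qed.

Lemma pairD_eta {K : fieldType} {n : nat} (u : 'rV[K]_(n + n)) k :
  pairD u (etaD k) = u 0 (lshift n k).
Proof. by rewrite /pairD /etaD /ieta row_mxKr row_mxKl dotr0 addr0 dotr_delta mxE. Qed.

Lemma pairD_h {K : fieldType} {n : nat} (u : 'rV[K]_(n + n)) k :
  pairD u (hD k) = u 0 (rshift n k).
Proof. by rewrite /pairD /hD /ih row_mxKr row_mxKl dotr0 add0r dotr_delta mxE. Qed.

Lemma pairD_ieta_eta {K : fieldType} {n : nat} (x : 'rV[K]_n) k : pairD (ieta x) (etaD k) = 0.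
Proof. by rewrite /pairD /etaD /ieta !row_mxKr !row_mxKl dotr0 dotr0l addr0. Qed.

Lemma pairD_ih_h {K : fieldType} {n : nat} (x : 'rV[K]_n) k : pairD (ih x) (hD k) = 0.
Proof. by rewrite /pairD /hD /ih !row_mxKr !row_mxKl dotr0 dotr0l addr0. Qed.

Lemma expand {K : fieldType} {n : nat} {A : comAlgType K} {br} {act : 'rV[K]_(n + n) -> A -> A} :
  is_action br act -> forall u a, act u a =
  \sum_(k < n) (pairD u (etaD k) *: act (hD k) a + pairD u (hD k) *: act (etaD k) a).
Proof.
move=> H u a; rewrite (act_expand H) big_split_ord big_split /=.
congr (_ + _); apply: eq_bigr => k _.
  by rewrite pairD_eta /bvec delta_mx_lshift.
by rewrite pairD_h /bvec delta_mx_rshift.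
Qed.

Lemma lie_anti {K : fieldType} {m : nat} (br : 'rV[K]_m -> 'rV[K]_m -> 'rV[K]_m) :
  is_lie br -> forall x y, br x y = - br y x.
Proof.
case=> H1 [H2 [H3 _]] x y.
have Ha : forall u v w, br (u + v) w = br u w + br v w.
  by move=> u v w; rewrite -[u]scale1r H1 !scale1r.
have Hb : forall u v w, br w (u + v) = br w u + br w v.
  by move=> u v w; rewrite -[u]scale1r H2 !scale1r.
have := H3 (x + y); rewrite Ha !Hb !H3 add0r addr0 => /eqP.
by rewrite addr_eq0 => /eqP.
Qed.

Definition Sf {K : fieldType} {n : nat} {A : comAlgType K} (act : 'rV[K]_(n + n) -> A -> A) a b :=
  \sum_(i < n) act (etaD i) a * act (hD i) b.

Lemma exp_ee {K : fieldType} {n : nat} {A : comAlgType K} {brh delta brD}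
  {act : 'rV[K]_(n + n) -> A -> A} :
  is_action brD act -> is_double brh delta brD -> forall i j a,
  act (brD (etaD i) (etaD j)) a =
  \sum_(k < n) pairD (brD (etaD i) (etaD j)) (hD k) *: act (etaD k) a.
Proof.
move=> H [_ [_ [Hee _]]] i j a; rewrite (expand H); apply: eq_bigr => k _.
by rewrite {1}/etaD Hee pairD_ieta_eta scale0r add0r.
Qed.

Lemma exp_hh {K : fieldType} {n : nat} {A : comAlgType K} {brh delta brD}
  {act : 'rV[K]_(n + n) -> A -> A} :
  is_action brD act -> is_double brh delta brD -> forall i j a,
  act (brD (hD i) (hD j)) a =
  \sum_(k < n) pairD (brD (hD i) (hD j)) (etaD k) *: act (hD k) a.
Proof.
move=> H [_ [Hhh _]] i j a; rewrite (expand H); apply: eq_bigr => k _.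
have -> : brD (hD i) (hD j) = ih (brh (bvec i) (bvec j)) by exact: Hhh.
by rewrite pairD_ih_h scale0r addr0.
Qed.

Lemma exp_he {K : fieldType} {n : nat} {A : comAlgType K} {brh delta brD}
  {act : 'rV[K]_(n + n) -> A -> A} :
  is_action brD act -> is_double brh delta brD -> forall i j a,
  act (brD (hD i) (etaD j)) a =
  \sum_(k < n) (pairD (brD (etaD j) (etaD k)) (hD i) *: act (hD k) a
               - pairD (brD (hD i) (hD k)) (etaD j) *: act (etaD k) a).
Proof.
move=> H [Hl [_ [_ Hinv]]] i j a; rewrite (expand H); apply: eq_bigr => k _.
rewrite Hinv pairDC; congr (_ + _).
rewrite Hinv (lie_anti _ Hl (etaD j)) pairDC pairDNl pairDC -Hinv.
by rewrite scaleNr.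
Qed.

Lemma actN {K : fieldType} {m : nat} {A : comAlgType K} {br} {act : 'rV[K]_m -> A -> A} :
  is_action br act -> forall x a, act x (- a) = - act x a.
Proof. by move=> H x a; rewrite -scaleN1r (actZ H) scaleN1r. Qed.

Lemma SN {K : fieldType} {n : nat} {A : comAlgType K} {br} {act : 'rV[K]_(n + n) -> A -> A} :
  is_action br act -> forall a b, Sf act a (- b) = - Sf act a b.
Proof.
move=> H a b; rewrite /Sf -sumrN; apply: eq_bigr => i _.
by rewrite (actN H) mulrN.
Qed.

Lemma S_exp1 {K : fieldType} {n : nat} {A : comAlgType K} {br} {act : 'rV[K]_(n + n) -> A -> A} :
  is_action br act -> forall a b c, Sf act a (Sf act b c) =
  \sum_(i < n) \sum_(j < n) (act (etaD i) a * act (hD i) (act (etaD j) b) * act (hD j) c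
     + act (etaD i) a * act (etaD j) b * act (hD i) (act (hD j) c)).
Proof.
move=> H a b c; rewrite /Sf; apply: eq_bigr => i _.
rewrite (act_sum H) mulr_sumr; apply: eq_bigr => j _.
have [_ [_ [HL _]]] := H.
rewrite HL; ring.
Qed.

Lemma S_exp3 {K : fieldType} {n : nat} {A : comAlgType K} {br} {act : 'rV[K]_(n + n) -> A -> A} :
  is_action br act -> forall a b c, Sf act (Sf act a b) c =
  \sum_(i < n) \sum_(j < n) (act (etaD j) (act (etaD i) a) * act (hD i) b * act (hD j) c
     + act (etaD i) a * act (etaD j) (act (hD i) b) * act (hD j) c).
Proof.
move=> H a b c; rewrite exchange_big /Sf /=; apply: eq_bigr => j _.
rewrite (act_sum H) mulr_suml; apply: eq_bigr => i _.
have [_ [_ [HL _]]] := H.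
rewrite HL; ring.
Qed.

Lemma dsplit {V : zmodType} {n : nat} (f g : 'I_n -> 'I_n -> V) :
  \sum_(i < n) \sum_(j < n) (f i j + g i j) =
  \sum_(i < n) \sum_(j < n) f i j + \sum_(i < n) \sum_(j < n) g i j.
Proof. rewrite -big_split; apply: eq_bigr => i _; by rewrite -big_split. Qed.

Lemma S_exp2 {K : fieldType} {n : nat} {A : comAlgType K} {br} {act : 'rV[K]_(n + n) -> A -> A} :
  is_action br act -> (forall a b, Sf act a b = - Sf act b a) -> forall a b c,
  Sf act b (Sf act a c) =
  \sum_(i < n) \sum_(j < n) (- (act (etaD i) (act (etaD j) a) * act (hD i) b * act (hD j) c)
     + act (etaD j) b * act (etaD i) a * act (hD j) (act (hD i) c)).
Proof.
move=> H Ha a b c; rewrite (S_exp1 H).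
rewrite dsplit [RHS]dsplit.
congr (_ + _); last by rewrite exchange_big.
rewrite exchange_big [RHS]exchange_big /=; apply: eq_bigr => j _.
transitivity (Sf act b (act (etaD j) a) * act (hD j) c).
  by rewrite /Sf mulr_suml.
rewrite Ha /Sf mulNr mulr_suml -sumrN; apply: eq_bigr => i _.
by [].
Qed.

Definition sc {K : fieldType} {A : comAlgType K} (k : K) : A := k%:A.

Lemma scE {K : fieldType} {A : comAlgType K} (k : K) (x : A) : k *: x = sc k * x.
Proof. by rewrite /sc mulr_algl. Qed.

Lemma scN {K : fieldType} {A : comAlgType K} (k : K) : sc (- k) = - sc k :> A.
Proof. by rewrite /sc scaleNr. Qed.

Lemma tsplit {V : zmodType} {n : nat} (f g : 'I_n -> 'I_n -> 'I_n -> V) :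
  \sum_(i < n) \sum_(j < n) \sum_(k < n) (f i j k + g i j k) =
  \sum_(i < n) \sum_(j < n) \sum_(k < n) f i j k + \sum_(i < n) \sum_(j < n) \sum_(k < n) g i j k.
Proof. rewrite -big_split; apply: eq_bigr => i _; by rewrite dsplit. Qed.

Lemma tsplitB {V : zmodType} {n : nat} (f g : 'I_n -> 'I_n -> 'I_n -> V) :
  \sum_(i < n) \sum_(j < n) \sum_(k < n) (f i j k - g i j k) =
  \sum_(i < n) \sum_(j < n) \sum_(k < n) f i j k - \sum_(i < n) \sum_(j < n) \sum_(k < n) g i j k.
Proof.
rewrite tsplit; congr (_ + _); rewrite -sumrN; apply: eq_bigr => i _.
rewrite -sumrN; apply: eq_bigr => j _; by rewrite -sumrN.
Qed.

Lemma trev {V : zmodType} {n : nat} (f : 'I_n -> 'I_n -> 'I_n -> V) :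
  \sum_(i < n) \sum_(j < n) \sum_(k < n) f i j k =
  \sum_(i < n) \sum_(j < n) \sum_(k < n) f k j i.
Proof.
rewrite exchange_big /=.
rewrite (eq_bigr (fun j => \sum_(k < n) \sum_(i < n) f i j k)); last first.
  by move=> j _; rewrite exchange_big.
by rewrite exchange_big.
Qed.

Lemma Tzero {K : fieldType} {n : nat} {A : comAlgType K} {brh delta brD}
  {act : 'rV[K]_(n + n) -> A -> A} :
  is_action brD act -> is_double brh delta brD -> forall a b c,
  \sum_(i < n) \sum_(j < n)
    (act (brD (etaD i) (etaD j)) a * act (hD i) b * act (hD j) c
     + act (etaD i) a * act (brD (hD i) (etaD j)) b * act (hD j) c
     + act (etaD i) a * act (etaD j) b * act (brD (hD i) (hD j)) c) = 0.
Proof.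
move=> H Hd a b c.
set cc := fun i j k => pairD (brD (etaD i) (etaD j)) (hD k).
set ff := fun i j k => pairD (brD (hD i) (hD j)) (etaD k).
transitivity (\sum_(i < n) \sum_(j < n) \sum_(k < n)
   ((sc (cc i j k) * (act (etaD k) a * act (hD i) b * act (hD j) c)
    + sc (cc j k i) * (act (etaD i) a * act (hD k) b * act (hD j) c))
   + (sc (ff i j k) * (act (etaD i) a * act (etaD j) b * act (hD k) c)
    - sc (ff i k j) * (act (etaD i) a * act (etaD k) b * act (hD j) c)) : A)).
  apply: eq_bigr => i _; apply: eq_bigr => j _.
  rewrite (exp_ee H Hd) (exp_he H Hd) (exp_hh H Hd).
  rewrite !(mulr_suml, mulr_sumr) -!big_split /=; apply: eq_bigr => k _.
  rewrite !scE; ring.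
rewrite tsplit tsplit tsplitB.
have -> : \sum_(i < n) \sum_(j < n) \sum_(k < n)
    (sc (cc i j k) * (act (etaD k) a * act (hD i) b * act (hD j) c) : A)
  = - \sum_(i < n) \sum_(j < n) \sum_(k < n)
    sc (cc j k i) * (act (etaD i) a * act (hD k) b * act (hD j) c).
  rewrite trev -sumrN; apply: eq_bigr => i _; rewrite -sumrN; apply: eq_bigr => j _.
  rewrite -sumrN; apply: eq_bigr => k _.
  have [Hl _] := Hd.
  by rewrite /cc (lie_anti _ Hl (etaD k)) pairDNl scN mulNr.
have -> : \sum_(i < n) \sum_(j < n) \sum_(k < n)
    (sc (ff i k j) * (act (etaD i) a * act (etaD k) b * act (hD j) c) : A)
  = \sum_(i < n) \sum_(j < n) \sum_(k < n)
    sc (ff i j k) * (act (etaD i) a * act (etaD j) b * act (hD k) c).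
  by apply: eq_bigr => i _; rewrite exchange_big.
by rewrite addNr subrr addr0.
Qed.

Lemma jacobiS {K : fieldType} {n : nat} {A : comAlgType K} {brh delta brD}
  {act : 'rV[K]_(n + n) -> A -> A} :
  is_action brD act -> is_double brh delta brD ->
  (forall a b, Sf act a b = - Sf act b a) -> forall a b c,
  Sf act a (Sf act b c) + Sf act b (Sf act c a) + Sf act c (Sf act a b) = 0.
Proof.
move=> H Hd Ha a b c.
rewrite (Ha c a) (SN H) (Ha c (Sf act a b)).
rewrite (S_exp2 H Ha a b c) (S_exp3 H a b c) (S_exp1 H a b c).
rewrite -[RHS](Tzero H Hd a b c).
rewrite -!sumrN -!big_split /=; apply: eq_bigr => i _.
rewrite -!sumrN -!big_split /=; apply: eq_bigr => j _.
have [_ [_ [_ HB]]] := H.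
rewrite !HB; ring.
Qed.

Theorem proposition3p15 (K : fieldType) (n : nat) (two_neq0 : (2%:R : K) != 0)
  (brh : 'rV[K]_n -> 'rV[K]_n -> 'rV[K]_n) (delta : 'rV[K]_n -> 'M[K]_n)
  (brD : 'rV[K]_(n + n) -> 'rV[K]_(n + n) -> 'rV[K]_(n + n))
  (A : comAlgType K) (act : 'rV[K]_(n + n) -> A -> A) :
  is_lie_bialg brh delta ->
  is_double brh delta brD ->
  is_poisson_h_base brD act ->
  is_poisson (bidiff act (rmat K n)) /\
  is_poisson_lie (mu brD) act (bidiff act (rmat K n)) /\
  (forall a b, bidiff act (rmat K n) a b = \sum_(i < n) act (etaD i) a * act (hD i) b).
Proof.
move=> _ Hd [H Hth].
have Hth' : forall a b, \sum_(i < n) (act (etaD i) a * act (hD i) b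
                                      + act (hD i) a * act (etaD i) b) = 0.
  move=> a b; have := Hth a b; rewrite /thetamat bidiffZ bidiff_sum.
  under eq_bigr => i _ do rewrite bidiffD !(bidiff_tens H).
  move=> E; rewrite -[LHS]scale1r -(mulfV two_neq0) -scalerA E scaler0 //.
have Ha : forall a b, Sf act a b = - Sf act b a.
  move=> a b; apply/eqP; rewrite -addr_eq0; apply/eqP.
  rewrite -[RHS](Hth' a b) big_split /=; congr (_ + _).
  by rewrite /Sf; apply: eq_bigr => i _; exact: mulrC.
have PE : forall a b, bidiff act (rmat K n) a b = Sf act a b.
  move=> a b; rewrite /rmat bidiff_sum.
  transitivity (\sum_(i < n) 2^-1 *: (act (etaD i) a * act (hD i) b
                                      - act (hD i) a * act (etaD i) b)).
    by apply: eq_bigr => i _; rewrite /wedge bidiffZ bidiffD bidiffN !(bidiff_tens H).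
  rewrite -scaler_sumr sumrB.
  have -> : \sum_(i < n) act (hD i) a * act (etaD i) b = - Sf act a b.
    by rewrite Ha opprK /Sf; apply: eq_bigr => i _; exact: mulrC.
  by rewrite opprK -mulr2n -scaler_nat scalerA mulVf // scale1r.
have [HZ [HX [HL HB]]] := H.
split; [|split].
- split.
    move=> k a b c; rewrite !PE /Sf scaler_sumr -big_split; apply: eq_bigr => i _.
    by rewrite HX mulrDl scalerAl.
  split; first by move=> a b; rewrite !PE; exact: Ha.
  split.
    move=> a b c; rewrite !PE /Sf mulr_suml mulr_sumr -big_split; apply: eq_bigr => i _.
    by rewrite HL mulrDr; congr (_ + _); [exact: mulrA | exact: mulrCA].
  by move=> a b c; rewrite !PE; exact: (jacobiS H Hd Ha).
- by move=> x a b; exact: (PL H).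
- by move=> a b; exact: PE.
Qed.
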